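(* Fix $\eta>0$, $\lambda\in\mathbb{R}^{2md}$ and $i\in V$, and let $\lambda'$ be obtained from $\lambda$ by replacing, for every $e\in N_i$, the block $\lambda_{e,i}$ with $$\lambda'_{e,i}(x)=\lambda_{e,i}(x)+\frac1\eta\log S^\lambda_{e,i}(x)-\frac{1}{\eta(|N_i|+1)}\log\Big(\mu^\lambda_i(x)\prod_{e'\in N_i}S^\lambda_{e',i}(x)\Big),\quad x\in\chi,$$ all other coordinates unchanged. Then $$L(\lambda)-L(\lambda')\ \ge\ \frac{1}{8|N_i|\eta}\sum_{e\in N_i}\|\nu^\lambda_{e,i}\|_1^2.$$
   Context: Let $G=(V,E)$ be a finite undirected graph with $n=|V|$, $m=|E|$, every vertex incident to at least one edge; $N_i=\{e\in E:i\in e\}$. $\chi$ is a finite label set with $d=|\chi|\ge2$. Costs $C_i\in\mathbb{R}^\chi$, $C_e\in\mathbb{R}^{\chi^2}$; for $e=\{i,j\}$, $x_e=(x_i,x_j)$ and $(x_e)_i=x_i$. Dual variables $\lambda=(\lambda_{e,i}(x))_{e\in E,i\in e,x\in\chi}\in\mathbb{R}^{2md}$ and $$L(\lambda)=\frac1\eta\sum_{i\in V}\log\sum_{x\in\chi}\exp\Big(-\eta C_i(x)+\eta\sum_{e\in N_i}\lambda_{e,i}(x)\Big)+\frac1\eta\sum_{e\in E}\log\sum_{x_e\in\chi^2}\exp\Big(-\eta C_e(x_e)-\eta\sum_{i\in e}\lambda_{e,i}((x_e)_i)\Big).$$ $\mu^\lambda_i(x)\propto\exp(-\eta C_i(x)+\eta\sum_{e\in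 N_i}\lambda_{e,i}(x))$, $\mu^\lambda_e(x_e)\propto\exp(-\eta C_e(x_e)-\eta\sum_{i\in e}\lambda_{e,i}((x_e)_i))$, each normalized to sum to $1$; $S^\lambda_{e,i}(x)=\sum_{x_e:(x_e)_i=x}\mu^\lambda_e(x_e)$; slack $\nu^\lambda_{e,i}=S^\lambda_{e,i}-\mu^\lambda_i$. *)

(* Defs.v *)
From HB Require Import structures.
From mathcomp Require Import all_boot all_order all_algebra.
From mathcomp Require Import all_classical all_reals all_analysis.
Set Implicit Arguments. Unset Strict Implicit. Unset Printing Implicit Defensive.
Import Order.TTheory GRing.Theory Num.Theory.
Local Open Scope ring_scope.

(* A graph: vertex type V, edge type E, each edge e = {src e, tgt e}
   (the orientation src/tgt is an arbitrary labelling of the two endpoints). Dual variables lam e i x (only coordinates with i \in e matter). *)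
Section Defs.
Variables (R : realType) (V E chi : finType).
Variables (src tgt : E -> V).
Variable (eta : R).
Variables (Ci : V -> chi -> R) (Ce : E -> chi * chi -> R).

Definition incident (e : E) (i : V) : bool := (src e == i) || (tgt e == i).
Definition Nbr (i : V) : {set E} := [set e | incident e i].

(* (x_e)_i for x_e = (x_{src e}, x_{tgt e}) *)
Definition proj_at (e : E) (i : V) (p : chi * chi) : chi :=
  if src e == i then p.1 else p.2.

Definition node_w (lam : E -> V -> chi -> R) (i : V) (x : chi) : R :=
  expR (- eta * Ci i x + eta * \sum_(e in Nbr i) lam e i x).
Definition edge_w (lam : E -> V -> chi -> R) (e : E) (p : chi * chi) : R :=
  expR (- eta * Ce e p - eta * (lam e (src e) p.1 + lam e (tgt e) p.2)).

Definition mu_node lam i x := node_w lam i x / \sum_(y : chi) node_w lam i y.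
Definition mu_edge lam e p := edge_w lam e p / \sum_(q : chi * chi) edge_w lam e q.

Definition Smarg lam (e : E) (i : V) (x : chi) : R :=
  \sum_(p : chi * chi | proj_at e i p == x) mu_edge lam e p.

Definition nu_slack lam e i x := Smarg lam e i x - mu_node lam i x.

Definition Ldual (lam : E -> V -> chi -> R) : R :=
  eta^-1 * \sum_(i : V) ln (\sum_(x : chi) node_w lam i x)
  + eta^-1 * \sum_(e : E) ln (\sum_(p : chi * chi) edge_w lam e p).

Definition lam_update (lam : E -> V -> chi -> R) (i : V) : E -> V -> chi -> R :=
  fun e j x =>
    if (j == i) && (e \in Nbr i) then
      lam e i x + eta^-1 * ln (Smarg lam e i x)
      - (eta * (#|Nbr i|%:R + 1))^-1 *
          ln (mu_node lam i x * \prod_(e' in Nbr i) Smarg lam e' i x)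
    else lam e j x.
End Defs.

(* Main.v *)
Require Import Defs.
From HB Require Import structures.
From mathcomp Require Import all_boot all_order all_algebra.
From mathcomp Require Import all_classical all_reals all_analysis.
From mathcomp Require Import lra ring.
Import Order.TTheory GRing.Theory Num.Theory.
Local Open Scope ring_scope.
Section Gen.
Variable R : realType.
Ltac rring := match goal with |- ?a = ?b => change (@eq R a b); ring end.

Lemma sum_pos (T : finType) (t : T) (f : T -> R) :
  (forall x, 0 < f x) -> 0 < \sum_x f x.
Proof.
move=> H; rewrite (bigD1 t) //=.
have : 0 <= \sum_(x | x != t) f x by apply: sumr_ge0 => x _; apply: ltW.
have := H t; lra.
Qed.

Lemma exp_tangent (m t : R) : expR m * (1 + t - m) <= expR t.
Proof.
have -> : expR t = expR m * expR (t - m) by rewrite -expRD; congr expR; ring.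
apply: ler_wpM2l; first exact: expR_ge0.
have -> : 1 + t - m = 1 + (t - m) by ring.
exact: expR_ge1Dx.
Qed.

Lemma jensen (I : finType) (P : pred I) (a b y z : I -> R) :
  (forall j, P j -> 0 <= a j) -> (forall j, P j -> 0 <= b j) ->
  \sum_(j | P j) (a j + b j) = 1 ->
  expR (\sum_(j | P j) (a j * y j + b j * z j))
  <= \sum_(j | P j) (a j * expR (y j) + b j * expR (z j)).
Proof.
move=> Ha Hb H1; set m := \sum_(j | P j) _.
have Em : \sum_(j | P j) (a j * y j + b j * z j) = m by [].
clearbody m.
apply: le_trans (_ : \sum_(j | P j) (a j * (expR m * (1 + y j - m))
   + b j * (expR m * (1 + z j - m))) <= _).
  suff -> : \sum_(j | P j) (a j * (expR m * (1 + y j - m))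
   + b j * (expR m * (1 + z j - m))) = expR m by [].
  have -> : \sum_(j | P j) (a j * (expR m * (1 + y j - m))
      + b j * (expR m * (1 + z j - m)))
    = expR m * (\sum_(j | P j) (a j + b j) + m
         - m * \sum_(j | P j) (a j + b j)).
    rewrite (_ : \sum_(j | P j) (a j + b j) + m - m * \sum_(j | P j) (a j + b j)
       = \sum_(j | P j) ((a j + b j) + (a j * y j + b j * z j) - m * (a j + b j))).
      rewrite mulr_sumr; apply: eq_bigr => j _.
      have E : forall (A B Y Z M X : R), A * (X * (1 + Y - M)) + B * (X * (1 + Z - M))
        = X * (A + B + (A * Y + B * Z) - M * (A + B)) by move=> *; ring.
      exact: E.
    by rewrite sumrB -mulr_sumr [X in _ = X - _]big_split /= Em.
  rewrite H1; rring.
apply: ler_sum => j Pj; apply: lerD; apply: ler_wpM2l; auto; exact: exp_tangent.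
Qed.

Lemma amgm2 (t u v : R) : 0 < t -> 0 <= v -> 2 * `|u| * v <= t * u ^+ 2 + v ^+ 2 / t.
Proof.
move=> t0 v0.
have -> : t * u ^+ 2 + v ^+ 2 / t = 2 * `|u| * v + (t * `|u| - v) ^+ 2 / t.
  rewrite -real_normK ?num_real //; field; lra.
have : 0 <= (t * `|u| - v) ^+ 2 / t by apply: divr_ge0; [apply: sqr_ge0|lra].
lra.
Qed.

Lemma hellinger (T : finType) (a b : T -> R) :
  (forall x, 0 <= a x) -> (forall x, 0 <= b x) ->
  \sum_x a x ^+ 2 = 1 -> \sum_x b x ^+ 2 = 1 ->
  (\sum_x `|a x ^+ 2 - b x ^+ 2|) ^+ 2 <= 8 * (1 - \sum_x a x * b x).
Proof.
move=> a0 b0 Ha Hb.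
set B := \sum_x a x * b x; set D := \sum_x _.
have HB : B <= 1.
  have : B <= \sum_x (a x ^+ 2 + b x ^+ 2) / 2.
    apply: ler_sum => x _; have := sqr_ge0 (a x - b x); rewrite !expr2; lra.
  rewrite -mulr_suml big_split /= Ha Hb; lra.
have D0 : 0 <= D by apply: sumr_ge0.
have [->|Dn0] := eqVneq D 0; first by rewrite expr2 mulr0; lra.
have Dp : 0 < D by rewrite lt_def Dn0.
have X : \sum_x (a x - b x) ^+ 2 = 2 - 2 * B.
  have -> : \sum_x (a x - b x) ^+ 2 = \sum_x (a x ^+ 2 + b x ^+ 2 - 2 * (a x * b x)).
    by apply: eq_bigr => x _; ring.
  by rewrite sumrB big_split /= Ha Hb -mulr_sumr.
have Y : \sum_x (a x + b x) ^+ 2 = 2 + 2 * B.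
  have -> : \sum_x (a x + b x) ^+ 2 = \sum_x (a x ^+ 2 + b x ^+ 2 + 2 * (a x * b x)).
    by apply: eq_bigr => x _; ring.
  by rewrite big_split big_split /= Ha Hb -mulr_sumr.
have K : 2 * D <= (4 / D) * (2 - 2 * B) + (2 + 2 * B) / (4 / D).
  have Ht : 0 < 4 / D by apply: divr_gt0; lra.
  move: (4 / D) Ht => t Ht.
  rewrite -X -Y mulr_sumr mulr_suml /D mulr_sumr -big_split /=.
  apply: ler_sum => x _.
  have -> : `|a x ^+ 2 - b x ^+ 2| = `|a x - b x| * (a x + b x).
    by rewrite -(ger0_norm (addr_ge0 (a0 x) (b0 x))) -normrM; congr `|_|; ring.
  rewrite mulrA; apply: amgm2; first by [].
  exact: addr_ge0.
have E2 : (2 + 2 * B) / (4 / D) = (2 + 2 * B) * D / 4.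
  by field; rewrite ?Dn0.
rewrite E2 in K.
move: K; set iD := 4 / D => K.
have HiD : iD * D = 4 by rewrite /iD; field; lra.
nra.
Qed.

End Gen.

Lemma eqW (R : realType) (x y : R) : x = y -> x <= y.
Proof. by move=> ->. Qed.

Section Main.
Variables (R : realType) (V E chi : finType) (src tgt : E -> V).
Hypothesis Hloop : forall e, src e != tgt e.
Variables (Ci : V -> chi -> R) (Ce : E -> chi * chi -> R) (eta : R).
Hypothesis Heta : 0 < eta.
Variables (lam : E -> V -> chi -> R) (i : V) (x0 : chi).

Local Notation N := (Nbr src tgt i).
Local Notation k := #|Nbr src tgt i|.
Local Notation lam' := (lam_update src tgt eta Ci Ce lam i).
Local Notation nw := (node_w src tgt eta Ci).
Local Notation ew := (edge_w src tgt eta Ce).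
Local Notation mu := (mu_node src tgt eta Ci lam i).
Local Notation S := (fun e => Smarg src tgt eta Ce lam e i).
Local Notation Z := (fun j => \sum_y nw lam j y).
Local Notation W := (fun e => \sum_p ew lam e p).

Lemma Zpos l j : 0 < \sum_y nw l j y.
Proof. apply: (@sum_pos R chi x0) => y. exact: expR_gt0. Qed.
Lemma Wpos l e : 0 < \sum_p ew l e p.
Proof. by apply: (@sum_pos R _ (x0, x0)) => y; exact: expR_gt0. Qed.
Lemma mu_pos x : 0 < mu x.
Proof. by apply: divr_gt0; [apply: expR_gt0 | apply: Zpos]. Qed.
Lemma S_pos e x : 0 < S e x.
Proof.
rewrite /Smarg (bigD1 (x, x)) /=; last by rewrite /proj_at; case: ifP.
have : 0 <= \sum_(p | (proj_at src e i p == x) && (p != (x, x))) mu_edge src tgt eta Ce lam e p.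
  by apply: sumr_ge0 => p _; apply: ltW; apply: divr_gt0; [apply: expR_gt0|apply: Wpos].
have : 0 < mu_edge src tgt eta Ce lam e (x, x).
  by apply: divr_gt0; [apply: expR_gt0|apply: Wpos].
lra.
Qed.
Lemma sum_mu : \sum_x mu x = 1.
Proof. by rewrite /mu_node -mulr_suml divff // gt_eqF // Zpos. Qed.
Lemma sum_S e : \sum_x S e x = 1.
Proof.
have H1 : \sum_p mu_edge src tgt eta Ce lam e p = 1.
  by rewrite /mu_edge -mulr_suml divff // gt_eqF // Wpos.
rewrite -H1 (partition_big (fun p => proj_at src e i p) xpredT) //=.
Qed.


Definition Lx x := ln (mu x) + \sum_(e in N) ln (S e x).
Definition Gf x := expR (Lx x / (k%:R + 1)).
Definition Dl e x := eta^-1 * ln (S e x) - (eta * (k%:R + 1))^-1 *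
          ln (mu x * \prod_(e' in N) S e' x).

Lemma ln_prod x : ln (mu x * \prod_(e in N) S e x) = Lx x.
Proof.
have -> : mu x * \prod_(e in N) S e x = expR (Lx x).
  rewrite /Lx expRD expR_sum lnK ?posrE ?mu_pos //; congr (_ * _).
  by apply: eq_bigr => e _; rewrite lnK // posrE S_pos.
by rewrite expRK.
Qed.

Lemma lam'_eq e j x : lam' e j x = lam e j x + (if (j == i) && (e \in N) then Dl e x else 0).
Proof.
rewrite /lam_update /Dl; case: ifP => [/andP[/eqP -> _]|_]; last by rewrite addr0.
rewrite /=; ring.
Qed.

Lemma etaDl e x : eta * Dl e x = ln (S e x) - Lx x / (k%:R + 1).
Proof.
rewrite /Dl ln_prod; field.
have : 0 < k%:R + 1 :> R by rewrite ltr_wpDl // ler0n.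
move=> h; apply/andP; split; rewrite gt_eqF //.
Qed.

Lemma node_upd x : nw lam' i x = Z i * Gf x.
Proof.
have HS : \sum_(e in N) lam' e i x = \sum_(e in N) lam e i x + \sum_(e in N) Dl e x.
  by rewrite -big_split; apply: eq_bigr => e eN; rewrite lam'_eq eqxx eN.
have HD : eta * \sum_(e in N) Dl e x = Lx x / (k%:R + 1) - ln (mu x).
  rewrite mulr_sumr (eq_bigr _ (fun e _ => etaDl e x)) sumrB sumr_const.
  rewrite /Lx -mulr_natr; field.
  have : 0 < k%:R + 1 :> R by rewrite ltr_wpDl // ler0n.
  by move=> h; rewrite gt_eqF.
transitivity (nw lam i x * expR (eta * \sum_(e in N) Dl e x)).
  by rewrite /node_w HS mulrDr addrA expRD.
have Hn : nw lam i x = Z i * expR (ln (mu x)).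
  by rewrite lnK ?posrE ?mu_pos // /mu_node mulrC divfK // gt_eqF // Zpos.
rewrite HD Hn -mulrA -expRD /Gf; congr (_ * expR _); ring.
Qed.


Lemma node_other j x : j != i -> nw lam' j x = nw lam j x.
Proof.
move=> Hj; rewrite /node_w; congr expR; congr (_ + _ * _).
by apply: eq_bigr => e _; rewrite lam'_eq (negbTE Hj) /= addr0.
Qed.

Lemma edge_other e p : e \notin N -> ew lam' e p = ew lam e p.
Proof.
move=> He; rewrite /edge_w !lam'_eq (negbTE He) !andbF !addr0 //.
Qed.

Lemma GS_exp y e : expR (- (eta * Dl e y)) = Gf y / S e y.
Proof.
rewrite etaDl opprB expRD expRN lnK // ?posrE ?S_pos // /Gf.
Qed.

Lemma edge_in e p : e \in N ->
  ew lam' e p = ew lam e p * (Gf (proj_at src e i p) / S e (proj_at src e i p)).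
Proof.
move=> eN; rewrite /edge_w !lam'_eq eN !andbT -GS_exp -expRD /proj_at.
have := eN; rewrite /Nbr inE /incident.
case: (eqVneq (src e) i) => [Hs _|Hs /= Ht].
  have Ht : (tgt e == i) = false.
    by apply/negbTE; move: (Hloop e); rewrite Hs eq_sym.
  rewrite Ht; congr expR; ring.
rewrite Ht; congr expR; ring.
Qed.

Lemma edge_sum e : e \in N -> \sum_p ew lam' e p = W e * \sum_x Gf x.
Proof.
move=> eN; rewrite (eq_bigr _ (fun p _ => edge_in e p eN)).
have Hw p : ew lam e p = W e * mu_edge src tgt eta Ce lam e p.
  by rewrite /mu_edge mulrC divfK // gt_eqF // Wpos.
rewrite (eq_bigr _ (fun p _ => congr1 (fun t => t * _) (Hw p))).
rewrite -(eq_bigr _ (fun p _ => mulrA _ _ _)) -mulr_sumr; congr (_ * _).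
rewrite (partition_big (fun p => proj_at src e i p) xpredT) //=.
apply: eq_bigr => y _.
rewrite (eq_bigr (fun p => mu_edge src tgt eta Ce lam e p * (Gf y / S e y))); last first.
  by move=> p /eqP ->.
rewrite -mulr_suml -/(Smarg _ _ _ _ _ _ _ _) mulrC divfK // gt_eqF // S_pos //.
Qed.


Lemma SG_pos : 0 < \sum_x Gf x.
Proof. by apply: (@sum_pos R _ x0) => y; exact: expR_gt0. Qed.

Lemma Ldiff : Ldual src tgt eta Ci Ce lam - Ldual src tgt eta Ci Ce lam'
  = - (eta^-1 * ((k%:R + 1) * ln (\sum_x Gf x))).
Proof.
set SG := \sum_x Gf x.
have Hn : \sum_j ln (\sum_y nw lam' j y) = \sum_j ln (Z j) + ln SG.
  rewrite (eq_bigr (fun j => ln (Z j) + (if j == i then ln SG else 0))).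
    by rewrite big_split /= -big_mkcond big_pred1_eq.
  move=> j _; case: eqVneq => [->|Hj].
    by rewrite (eq_bigr _ (fun x _ => node_upd x)) -mulr_sumr lnM // posrE ?Zpos ?SG_pos.
  rewrite addr0; congr ln; apply: eq_bigr => x _; exact: node_other.
have He : \sum_e ln (\sum_p ew lam' e p) = \sum_e ln (W e) + ln SG *+ k.
  rewrite (eq_bigr (fun e => ln (W e) + (if e \in N then ln SG else 0))).
    by rewrite big_split /= -big_mkcond sumr_const.
  move=> e _; case: ifP => eN.
    by rewrite edge_sum // lnM // posrE ?Wpos ?SG_pos.
  rewrite addr0; congr ln; apply: eq_bigr => p _; by apply: edge_other; rewrite eN.
rewrite /Ldual Hn He -mulr_natl; ring.
Qed.


Lemma sq_half (y : R) : 0 < y -> expR (ln y / 2) ^+ 2 = y.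
Proof. by move=> y0; rewrite expr2 -expRD -splitr lnK // posrE. Qed.

Definition tf e x := expR ((ln (mu x) + ln (S e x)) / 2).

Lemma key (k1 : (0 < k)%N) :
  (4 * k%:R)^-1 * \sum_(e in N) (\sum_x `|S e x - mu x|) ^+ 2
  <= (k%:R + 1) * (1 - \sum_x Gf x).
Proof.
set K : R := k%:R.
have HK : k%:R = K by [].
clearbody K.
have K1 : 1 <= K by rewrite -HK ler1n.
set a := 2 / (K * (K + 1)); set b := (K - 1) / (K * (K + 1)).
have KK : K * (K + 1) != 0 by rewrite mulf_neq0 // gt_eqF //; lra.
have K0 : K != 0 by rewrite gt_eqF //; lra.
have K10 : K + 1 != 0 by rewrite gt_eqF //; lra.
have a0 : 0 <= a by rewrite /a divr_ge0 // mulr_ge0 //; lra.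
have b0 : 0 <= b by rewrite /b divr_ge0 ?mulr_ge0 //; lra.
have Hpt x : Gf x <= \sum_(e in N) (a * tf e x + b * S e x).
  have J := @jensen R E (fun e => e \in N) (fun=> a) (fun=> b)
     (fun e => (ln (mu x) + ln (S e x)) / 2) (fun e => ln (S e x)).
  move: J => /= J.
  have Hab : \sum_(e in N) (a + b) = 1.
    rewrite sumr_const -mulr_natr HK /a /b.
    match goal with |- ?u = ?v => change (@eq R u v) end. field.
    by rewrite K10 K0.
  have := J (fun _ _ => a0) (fun _ _ => b0) Hab.
  have -> : \sum_(e in N) (a * ((ln (mu x) + ln (S e x)) / 2) + b * ln (S e x))
      = Lx x / (K + 1).
    rewrite (eq_bigr (fun e => a / 2 * ln (mu x) + (a / 2 + b) * ln (S e x))); last first.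
      by move=> e _; field.
    rewrite big_split /= sumr_const -mulr_sumr -(mulr_natr (a / 2 * ln (mu x))) HK /Lx /a /b.
    match goal with |- ?u = ?v => change (@eq R u v) end. field.
    by rewrite K10 K0.
  move=> H; rewrite /Gf HK; apply: (le_trans H); apply/eqW.
  by apply: eq_bigr => e _; rewrite lnK // posrE S_pos.
have HS : \sum_x Gf x <= a * \sum_(e in N) (\sum_x tf e x) + b * K.
  apply: (le_trans (ler_sum _ (fun x _ => Hpt x))).
  rewrite exchange_big /=.
  rewrite (eq_bigr (fun e => a * \sum_x tf e x + b)); last first.
    by move=> e _; rewrite big_split /= -!mulr_sumr sum_S mulr1.
  by rewrite big_split /= sumr_const -mulr_sumr -mulr_natr HK.
have Hell e : (\sum_x `|S e x - mu x|) ^+ 2 <= 8 * (1 - \sum_x tf e x).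
  have E1 : \sum_x expR (ln (S e x) / 2) ^+ 2 = 1.
    by rewrite (eq_bigr (S e)) ?sum_S // => x _; apply: sq_half; exact: S_pos.
  have E2 : \sum_x expR (ln (mu x) / 2) ^+ 2 = 1.
    by rewrite (eq_bigr mu) ?sum_mu // => x _; apply: sq_half; exact: mu_pos.
  have H : (\sum_x `|expR (ln (S e x) / 2) ^+ 2 - expR (ln (mu x) / 2) ^+ 2|) ^+ 2
      <= 8 * (1 - \sum_x expR (ln (S e x) / 2) * expR (ln (mu x) / 2)) :=
     @hellinger R chi (fun x => expR (ln (S e x) / 2)) (fun x => expR (ln (mu x) / 2))
     (fun _ => expR_ge0 _) (fun _ => expR_ge0 _) E1 E2.
  have Ea : \sum_x `|expR (ln (S e x) / 2) ^+ 2 - expR (ln (mu x) / 2) ^+ 2|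
      = \sum_x `|S e x - mu x|.
    by apply: eq_bigr => x _; rewrite sq_half ?S_pos // sq_half ?mu_pos.
  have Et : \sum_x expR (ln (S e x) / 2) * expR (ln (mu x) / 2) = \sum_x tf e x.
    apply: eq_bigr => x _; rewrite -expRD /tf; congr expR.
    by match goal with |- ?u = ?v => change (@eq R u v) end; field.
  by move: H; rewrite Ea Et.
have HD : \sum_(e in N) (\sum_x `|S e x - mu x|) ^+ 2
    <= 8 * (K - \sum_(e in N) (\sum_x tf e x)).
  apply: (le_trans (ler_sum _ (fun e _ => Hell e))); apply/eqW.
  by rewrite -mulr_sumr sumrB sumr_const HK.
set SB := \sum_(e in N) _ in HS HD.
apply: (@le_trans _ _ ((4 * K)^-1 * (8 * (K - SB)))).
  by apply: ler_wpM2l => //; rewrite invr_ge0; lra.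
apply: (@le_trans _ _ ((K + 1) * (1 - (a * SB + b * K)))); last first.
  by apply: ler_wpM2l; [lra | lra].
apply/eqW; rewrite /a /b; by field; rewrite K10 K0.
Qed.


Lemma final (k1 : (0 < k)%N) :
  Ldual src tgt eta Ci Ce lam - Ldual src tgt eta Ci Ce lam'
  >= (8 * k%:R * eta)^-1 *
     \sum_(e in N) (\sum_x `|nu_slack src tgt eta Ci Ce lam e i x|) ^+ 2.
Proof.
rewrite Ldiff.
have hk := key k1.
set T := \sum_(e in N) _ in hk.
have -> : \sum_(e in N) (\sum_x `|nu_slack src tgt eta Ci Ce lam e i x|) ^+ 2 = T by [].
have T0 : 0 <= T by apply: sumr_ge0 => e _; apply: sqr_ge0.
have SG0 := SG_pos.
set SG := \sum_x Gf x in hk SG0 *.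
have hl : ln SG <= SG - 1.
  have := expR_ge1Dx (ln SG); rewrite lnK ?posrE //; lra.
set K : R := k%:R in hk *.
have K0 : 0 < K by rewrite /K ltr0n.
clearbody K.
set q := (4 * K)^-1 * T in hk.
have q0 : 0 <= q by rewrite /q mulr_ge0 // invr_ge0; lra.
have h1 : q <= - ((K + 1) * ln SG) by nra.
have -> : (8 * K * eta)^-1 * T = eta^-1 * (q / 2).
  rewrite /q; field; apply/andP; split; rewrite gt_eqF //.
rewrite -mulrN; apply: ler_wpM2l; first by rewrite invr_ge0 ltW.
move: h1 q0; set X := (K + 1) * ln SG; move=> h1 q0; lra.
Qed.

End Main.

Theorem lemma2 (R : realType) (V E chi : finType) (src tgt : E -> V)
  (Hloop : forall e : E, src e != tgt e)
  (Hsimple : forall e f : E,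
      [set src e; tgt e] = [set src f; tgt f] -> e = f)
  (Hcover : forall v : V, exists e : E, Defs.incident src tgt e v)
  (Hchi : (2 <= #|chi|)%N)
  (Ci : V -> chi -> R) (Ce : E -> chi * chi -> R)
  (eta : R) (Heta : 0 < eta) (lam : E -> V -> chi -> R) (i : V) :
  Defs.Ldual src tgt eta Ci Ce lam
    - Defs.Ldual src tgt eta Ci Ce (Defs.lam_update src tgt eta Ci Ce lam i)
  >= (8 * #|Defs.Nbr src tgt i|%:R * eta)^-1 *
     \sum_(e in Defs.Nbr src tgt i)
        (\sum_(x : chi) `|Defs.nu_slack src tgt eta Ci Ce lam e i x|) ^+ 2.
Proof.
have : (0 < #|chi|)%N by apply: leq_trans Hchi.
move=> /card_gt0P [x0 _].
have k1 : (0 < #|Nbr src tgt i|)%N.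
  apply/card_gt0P; have [e He] := Hcover i; exists e; by rewrite inE.
exact: (@final R V E chi src tgt Hloop Ci Ce eta Heta lam i x0 k1).
Qed.
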